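(* Let $\rho$ be a probability measure on subgraphs $G$ of $\mathbb Z^2$ invariant under translations (or a joint law of a subgraph $G$ and interactions $w\in\mathbb R^{E(\mathbb Z^2)}$ invariant under the diagonal action of translations), such that almost surely every vertex of $G$ is contained in only finitely many simple cycles of $G$. Then there exists a random subgraph $F$, jointly distributed with $G$ (and $w$), such that the marginal law of $G$ (resp. $(G,w)$) is $\rho$, the joint law of $(G,F)$ (resp. $(G,w,F)$) is translation invariant, and almost surely $F$ is a spanning forest of $G$ whose connected components are exactly the connected components of $G$ (i.e. $F\subseteq G$, $F$ has no cycles, and two vertices are connected in $F$ iff they are connected in $G$).
   Context: $\mathbb Z^2$ is the square lattice graph; translations of $\mathbb Z^2$ act on subgraphs and on edge-indexed interactions. A cycle is a closed path; it is simple if it has no self-intersections. *)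

(* Defs.v *)
From HB Require Import structures.
From mathcomp Require Import all_boot all_order all_algebra.
From mathcomp Require Import all_classical all_reals all_analysis.
Set Implicit Arguments. Unset Strict Implicit. Unset Printing Implicit Defensive.
Import Order.TTheory GRing.Theory Num.Theory.
Local Open Scope classical_set_scope.
Local Open Scope ring_scope.

Definition V := (int * int)%type.
(* edges: (v, false) is the horizontal edge {v, v + (1,0)},
          (v, true)  is the vertical   edge {v, v + (0,1)};
   this enumerates every edge of Z^2 exactly once. *)
Definition E := (V * bool)%type.

Definition esrc (e : E) : V := e.1.
Definition edst (e : E) : V :=
  if e.2 then (e.1.1, e.1.2 + 1) else (e.1.1 + 1, e.1.2).

(* a (spanning) subgraph of Z^2 is given by its edge set G : E -> bool *)
(* adjacency in the subgraph G (boolean, so that seq's path/cycle apply):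
   u ~ v iff some edge of G has endpoints {u, v} *)
Definition adj (G : E -> bool) : rel V := fun u v =>
  [|| G (u, false) && (v == edst (u, false)),
      G (u, true)  && (v == edst (u, true)),
      G (v, false) && (u == edst (v, false))
    | G (v, true)  && (u == edst (v, true))].

Definition simple_cycle (G : E -> bool) (c : seq V) : bool :=
  [&& 3 <= size c, uniq c & cycle (adj G) c]%N.

(* every vertex of G lies on only finitely many simple cycles of G
   (cycles counted as vertex sequences; this differs from counting
   cycles as subgraphs only by the finite factor 2n of rotations and
   reversals, so finiteness is the same) *)
Definition finitely_many_cycles (G : E -> bool) : Prop :=
  forall v : V, finite_set [set c : seq V | simple_cycle G c /\ v \in c].

Definition connected (G : E -> bool) (u v : V) : Prop :=
  exists p : seq V, path (adj G) u p /\ last u p = v.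

Definition acyclic (F : E -> bool) : Prop :=
  forall c : seq V, ~ simple_cycle F c.

Definition spanning_forest_of (G F : E -> bool) : Prop :=
  [/\ (forall e, F e -> G e),
      acyclic F &
      (forall u v : V, connected F u v <-> connected G u v)].

Definition cylinders d (M : measurableType d) : set (set (E -> M)) :=
  [set S | exists (e : E) (A : set M), measurable A /\
                                       S = (fun x => x e) @^-1` A].

Definition conf d (M : measurableType d) := g_sigma_algebraType (@cylinders d M).

Definition shift d (M : measurableType d) (a : V) (x : conf M) : conf M :=
  fun e => x ((e.1.1 + a.1, e.1.2 + a.2), e.2).

Definition translation_invariant d (M : measurableType d) (R : realType)
  (mu : probability (conf M) R) : Prop :=
  forall (a : V) (A : set (conf M)), measurable A ->
    mu (shift a @^-1` A) = mu A.

(* The statement of the lemma for labels in M, where gr : M -> bool reads off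
   from the label of an edge whether it belongs to G (M = bool, gr = id for
   the law of G alone; M = bool * R, gr = fst for the joint law of (G, w)).
   The random forest F is encoded by an extra boolean label per edge. *)
Definition forest_coupling_statement d (M : measurableType d) (gr : M -> bool)
  (R : realType) : Prop :=
  forall rho : probability (conf M) R,
    translation_invariant rho ->
    {ae rho, forall x : conf M, finitely_many_cycles (fun e => gr (x e))} ->
    exists mu : probability (conf (M * bool)%type) R,
      [/\ (forall A : set (conf M), measurable A ->
             mu ((fun (y : conf (M * bool)%type) (e : E) => (y e).1) @^-1` A)
             = rho A),
          translation_invariant mu &
          {ae mu, forall y : conf (M * bool)%type,
              spanning_forest_of (fun e => gr (y e).1) (fun e => (y e).2)}].

(* Main.v *)
Require Import Defs.
From HB Require Import structures.
From mathcomp Require Import all_boot all_order all_algebra.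
From mathcomp Require Import all_classical all_reals all_analysis.
From mathcomp Require Import zify.
Set Implicit Arguments. Unset Strict Implicit. Unset Printing Implicit Defensive.
Import Order.TTheory GRing.Theory Num.Theory.
Local Open Scope classical_set_scope.
Local Open Scope ring_scope.
Definition nb (u v : V) := adj (fun _ => true) u v.
Definition eb (u v : V) : E :=
  if v == edst (u, false) then (u, false) else
  if v == edst (u, true) then (u, true) else
  if u == edst (v, false) then (v, false) else (v, true).

Ltac splitall := repeat match goal with
  | |- context [?a == ?b :> int] => case: (eqVneq a b) => ?
  end.

Lemma adj_sym G u v : adj G u v = adj G v u.
Proof. rewrite /adj; by case: (G (u,false)) (G (u,true)) (G (v,false)) (G (v,true)) => [] [] [] [] /=;
  case: (v == _); case: (u == _); case: (u == _); case: (v == _). Qed.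

Lemma ebC u v : nb u v -> eb u v = eb v u.
Proof.
case: u v => [u1 u2] [v1 v2]; rewrite /nb /adj /eb /edst /= !xpair_eqE.
splitall => //=; lia.
Qed.

Lemma adj_nb G u v : adj G u v -> nb u v.
Proof.
rewrite /nb /adj; by case: (G (u,false)) (G (u,true)) (G (v,false)) (G (v,true)) => [] [] [] [] /=;
  case: (v == _); case: (u == _); case: (u == _); case: (v == _).
Qed.

Lemma adjE G u v : nb u v -> adj G u v = G (eb u v).
Proof.
case: u v => [u1 u2] [v1 v2]; rewrite /nb /adj /eb /edst /= !xpair_eqE.
splitall => //=; rewrite ?andbT ?andbF ?orbF //=; try lia.
Qed.

Lemma eb_inj u v x y : nb u v -> nb x y -> eb u v = eb x y ->
  (u = x /\ v = y) \/ (u = y /\ v = x).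
Proof.
case: u v x y => [u1 u2] [v1 v2] [x1 x2] [y1 y2]; rewrite /nb /adj /eb /edst /= !xpair_eqE.
splitall => //=; move=> H1 H2 [] *; subst; try lia; 
  try (left; split; congr pair; lia); try (right; split; congr pair; lia).
Qed.

Definition elt (e f : E) : bool :=
  (e.1.1 < f.1.1) || ((e.1.1 == f.1.1) &&
     ((e.1.2 < f.1.2) || ((e.1.2 == f.1.2) && (~~ e.2 && f.2)))).

Lemma elt_irr e : ~~ elt e e.
Proof. by rewrite /elt !ltxx !eqxx /=; case: e.2. Qed.

Lemma elt_trans e f g : elt e f -> elt f g -> elt e g.
Proof.
case: e f g => [[e1 e2] e3] [[f1 f2] f3] [[g1 g2] g3]; rewrite /elt /=.
splitall => //=; rewrite ?orbF ?andbF /=; try (case: e3; case: f3; case: g3 => //=); lia.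
Qed.

Lemma elt_total e f : e != f -> elt e f || elt f e.
Proof.
case: e f => [[e1 e2] e3] [[f1 f2] f3]; rewrite /elt /= !xpair_eqE.
splitall => //=; rewrite ?orbF ?andbF /=; try (case: e3; case: f3 => //=); lia.
Qed.

Lemma max_exists (s : seq E) : s != [::] -> exists2 m, m \in s & all (fun f => ~~ elt m f) s.
Proof.
elim: s => [//|x s IH] _.
case: (eqVneq s [::]) => [->|/IH [m ms mall]].
  by exists x; rewrite ?inE ?eqxx //= elt_irr.
case: (boolP (elt m x)) => hmx.
  exists x; first by rewrite inE eqxx.
  rewrite /= elt_irr /=; apply/allP => f fs; apply/negP => hxf.
  by move/allP: mall => /(_ f fs); rewrite (elt_trans hmx hxf).
exists m; first by rewrite inE ms orbT.
by rewrite /= hmx.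
Qed.

Fixpoint pedges (x : V) (p : seq V) : seq E :=
  if p is y :: q then eb x y :: pedges y q else [::].

Definition cedges (c : seq V) : seq E :=
  if c is x :: p then pedges (last x p) (x :: p) else [::].

Lemma pedges_cat x p1 p2 : pedges x (p1 ++ p2) = pedges x p1 ++ pedges (last x p1) p2.
Proof. by elim: p1 x => [|y p1 IH] x //=; rewrite IH. Qed.

Lemma size_pedges x p : size (pedges x p) = size p.
Proof. by elim: p x => [|y p IH] x //=; rewrite IH. Qed.

Lemma size_cedges c : size (cedges c) = size c.
Proof. by case: c => [|x p] //=; rewrite size_pedges. Qed.

Lemma cedges_rot1 c : cedges (rot 1 c) = rot 1 (cedges c).
Proof.
case: c => [//|x [|z p]] //.
rewrite rot1_cons /= rot1_cons /= last_rcons.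
by rewrite -cats1 pedges_cat /= cats1.
Qed.

Lemma cedges_rot n c : cedges (rot n c) = rot n (cedges c).
Proof.
elim: n => [|n IH]; first by rewrite !rot0.
case: (ltnP n (size c)) => hn.
  rewrite rotS // cedges_rot1 IH -rotS // size_cedges //.
rewrite !rot_oversize ?size_cedges //; lia.
Qed.

Definition maxon (c : seq V) (e : E) : bool :=
  (e \in cedges c) && all (fun f => ~~ elt e f) (cedges c).

Definition Fo (G : E -> bool) (e : E) : bool :=
  G e && ~~ `[< exists c, simple_cycle G c && maxon c e >].

Lemma pedges_ends (r : rel V) x p g : path r x p -> g \in pedges x p ->
  exists u v p1 p2, [/\ g = eb u v, r u v & x :: p = p1 ++ u :: v :: p2].
Proof.
elim: p x => [//|y q IH] x /= /andP [rxy pq]; rewrite inE => /orP [/eqP ->|gq].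
  by exists x, y, [::], q.
have [u [v [p1 [p2 [-> ruv e]]]]] := IH _ pq gq.
by exists u, v, (x :: p1), p2; rewrite e.
Qed.

Lemma cedges_ends G c g : cycle (adj G) c -> g \in cedges c ->
  exists u v, [/\ g = eb u v, adj G u v, u \in c & v \in c].
Proof.
case: c => [//|d R] cyc gin.
rewrite (cycle_path d) in cyc.
have [u [v [p1 [p2 [-> ruv e]]]]] := pedges_ends cyc gin.
have hl : last d R \in d :: R by apply: mem_last.
have sub : forall w, w \in last d R :: d :: R -> w \in d :: R.
  by move=> w; rewrite inE => /orP [/eqP ->|].
exists u, v; split => //; apply: sub; rewrite e mem_cat !inE eqxx ?orbT //.
Qed.

Lemma cedges_endsE G c u v : cycle (adj G) c -> nb u v -> eb u v \in cedges c ->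
  u \in c /\ v \in c.
Proof.
move=> cyc nuv /(cedges_ends cyc) [x [y [e axy xc yc]]].
by have [[-> ->]|[-> ->]] := eb_inj nuv (adj_nb axy) e.
Qed.

Lemma pedges_G G x p g : path (adj G) x p -> g \in pedges x p -> G g.
Proof.
move=> pp /(pedges_ends pp) [u [v [p1 [p2 [-> auv _]]]]].
by rewrite -adjE // (adj_nb auv).
Qed.

Lemma cedges_G G c g : cycle (adj G) c -> g \in cedges c -> G g.
Proof.
move=> cyc /(cedges_ends cyc) [u [v [-> auv _ _]]].
by rewrite -adjE // (adj_nb auv).
Qed.

Notation conn := Defs.connected.
Lemma connected_refl G u : conn G u u.
Proof. by exists [::]. Qed.

Lemma connected_trans G u v w : conn G u v -> conn G v w -> conn G u w.
Proof.
move=> [p [pp lp]] [q [pq lq]]; exists (p ++ q); split.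
  by rewrite cat_path pp lp.
by rewrite last_cat lp.
Qed.

Lemma connected_adj G u v : adj G u v -> conn G u v.
Proof. by move=> h; exists [:: v]; rewrite /= h. Qed.

Lemma connected_sym G u v : conn G u v -> conn G v u.
Proof.
move=> [p [pp lp]]; exists (rev (belast u p)); split.
  rewrite -lp rev_path; apply: sub_path pp => x y; by rewrite adj_sym.
case: p pp lp => [|y p] /= _; first by move=> ->.
by rewrite rev_cons last_rcons.
Qed.

Lemma path_connected G H x p :
  path (adj G) x p ->
  (forall u v, adj G u v -> eb u v \in pedges x p -> conn H u v) ->
  conn H x (last x p).
Proof.
elim: p x => [|y p IH] x /=; first by move=> *; apply: connected_refl.
move=> /andP [axy pp] h; apply: connected_trans (IH y pp _).
  by apply: h => //; rewrite inE eqxx.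
by move=> u v auv e; apply: h => //; rewrite inE e orbT.
Qed.

Lemma rot_head (T : eqType) (x : T) (s : seq T) : x \in s ->
  exists R, rot (index x s) s = x :: R.
Proof.
move=> xs; rewrite /rot (drop_nth x); last by rewrite index_mem.
by rewrite nth_index //; eexists.
Qed.

Lemma rot_edge G c h : simple_cycle G c -> h \in cedges c ->
  exists y Q, [/\ simple_cycle G (y :: Q), h = eb (last y Q) y,
    (y :: Q) =i c & cedges (y :: Q) =i cedges c].
Proof.
move=> sc hc.
have [R hR] := rot_head hc.
pose n := index h (cedges c).
have : cedges (rot n c) = h :: R by rewrite cedges_rot.
case E: (rot n c) => [|y Q] // hE.
have e1 : eb (last y Q) y = h by case: hE.
exists y, Q; split.
- by rewrite -E /simple_cycle size_rot rot_uniq rot_cycle.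
- by rewrite -e1.
- by rewrite -E; apply: mem_rot.
- by move=> f; rewrite -E cedges_rot mem_rot.
Qed.

Lemma closing_not_path G y Q g : simple_cycle G (y :: Q) -> g \in pedges y Q ->
  g != eb (last y Q) y.
Proof.
move=> /and3P [s3 un cyc] gin.
have pp : path (adj G) y Q by move: cyc; rewrite /= rcons_path => /andP [].
have nxy : nb (last y Q) y.
  by move: cyc; rewrite /= rcons_path => /andP [_ /adj_nb].
have [u [v [p1 [p2 [-> auv e]]]]] := pedges_ends pp gin.
have yQ : y \notin Q by move: un => /= /andP [].
have uQ : uniq Q by move: un => /= /andP [].
have lQ : last y Q \in Q.
  by case: (Q) s3 => [|w W] hs; [ | exact: (mem_last w W)].

apply/eqP => /(eb_inj (adj_nb auv) nxy) [[eu ev]|[eu ev]].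
- case: p1 e => [|z p1] /= [ey eQ].
    by move: yQ; rewrite ey eu lQ.
  by move: yQ; rewrite eQ mem_cat !inE ev eqxx !orbT.
- case: p1 e => [|z p1] /= [ey eQ]; last first.
    by move: yQ; rewrite eQ mem_cat !inE -eu eqxx !orbT.
  move: uQ s3 ev; rewrite eQ /= => /andP [hv _].
  case: (p2) hv => [|w p3] //= hv _ ev.
  by move: (mem_last w p3); rewrite -ev (negbTE hv).
Qed.

Lemma first_split (D L : seq V) : has (fun w => w \in D) L ->
  exists L1 z L', [/\ L = L1 ++ z :: L', z \in D & ~~ has (fun w => w \in D) L1].
Proof.
elim: L => [//|w L IH] /=; case: (boolP (w \in D)) => wD /=.
  by move=> _; exists [::], w, L.
move=> /IH [L1 [z [L' [-> zD h]]]]; exists (w :: L1), z, L'; split => //=.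
by rewrite (negbTE wD).
Qed.

Lemma last_split (D L : seq V) : has (fun w => w \in D) L ->
  exists M z L2, [/\ L = M ++ z :: L2, z \in D & ~~ has (fun w => w \in D) L2].
Proof.
elim: L => [//|w L IH] /=; case: (boolP (has (fun w => w \in D) L)) => hL.
  move=> _; have [M [z [L2 [-> zD h]]]] := IH hL.
  by exists (w :: M), z, L2.
rewrite orbF => wD; by exists [::], w, L.
Qed.

Lemma size2 (T : eqType) (a b : T) (W : seq T) : a \in W -> b \in W -> a != b -> (1 < size W)%N.
Proof.
case: W => [|p [|q r]] //=; rewrite !inE => /eqP -> /eqP ->; by rewrite eqxx.
Qed.

Lemma arc G D y' x' a : uniq D -> cycle (adj G) D -> y' \in D -> x' \in D -> a \in D ->
  y' != x' -> a != y' -> a != x' ->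
  exists W, [/\ path (adj G) y' W, last y' W = x', uniq (y' :: W), a \in W &
               {subset W <= D}].
Proof.
move=> uD cD yD xD aD yx ay ax.
have [R hR] := rot_head yD.
have u0 : uniq (y' :: R) by rewrite -hR rot_uniq.
have c0 : cycle (adj G) (y' :: R) by rewrite -hR rot_cycle.
have m0 : forall w, w \in y' :: R -> w \in D by move=> w; rewrite -hR mem_rot.
have xR : x' \in R.
  by move: xD; rewrite -(mem_rot (index y' D)) hR inE eq_sym (negbTE yx).
have aR : a \in R.
  by move: aD; rewrite -(mem_rot (index y' D)) hR inE (negbTE ay).
case/splitPr: xR u0 c0 m0 aR => R1 R2 u0 c0 m0 aR.
move: c0; rewrite /= rcons_cat cat_path /= => /andP [p1 /andP [a1 p2]].
move: aR; rewrite mem_cat inE (negbTE ax) /= => /orP [aR1|aR2].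
- have uW : uniq (y' :: rcons R1 x').
    apply: (subseq_uniq _ u0).
    have -> : y' :: rcons R1 x' = (y' :: R1) ++ [:: x'] by rewrite -cats1.
    have -> : y' :: R1 ++ x' :: R2 = (y' :: R1) ++ (x' :: R2) by [].
    apply: cat_subseq => //; exact: (prefix_subseq [:: x'] R2).
  exists (rcons R1 x'); split.
  + by rewrite rcons_path p1 a1.
  + by rewrite last_rcons.
  + exact: uW.
  + by rewrite mem_rcons inE aR1 orbT.
  + by move=> w; rewrite mem_rcons => hw; apply: m0; move: hw;
      rewrite !inE mem_cat !inE => /orP [->|->]; rewrite ?orbT.
- have uW : uniq (y' :: rev (x' :: R2)).
    rewrite cons_uniq mem_rev rev_uniq.
    move: u0; rewrite /= mem_cat negb_or cat_uniq.
    by case/andP => /andP [_ h1] /and3P [_ _ h2]; rewrite h1 /=.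
  exists (rev (x' :: R2)); split.
  + have := rev_path (adj G) x' (rcons R2 y').
    rewrite last_rcons belast_rcons => ->.
    move: p2; apply: sub_path => w z; by rewrite adj_sym.
  + by rewrite rev_cons last_rcons.
  + exact: uW.
  + by rewrite mem_rev inE aR2 orbT.
  + by move=> w; rewrite mem_rev => hw; apply: m0; rewrite inE mem_cat hw !orbT.
Qed.

Lemma merge G D c a h g : simple_cycle G D -> a \in D -> h \in cedges D ->
  simple_cycle G c -> h \in cedges c -> g \in cedges c ->
  exists D', [/\ simple_cycle G D', a \in D' & g \in cedges D'].
Proof.
move=> sD aD hD sc hc gc.
case: (boolP (a \in c)) => ac; first by exists c.
case: (eqVneq g h) => [->|gh]; first by exists D.
have [y [Q [sL eg memL memE]]] := rot_edge sc gc.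
set x := last y Q in eg.
have aL : a \notin y :: Q by rewrite memL.
have hL : h \in cedges (y :: Q) by rewrite memE.
have hp : h \in pedges y Q.
  by move: hL; rewrite /= inE -/x -eg eq_sym (negbTE gh).
move: sL => /and3P [s3 un cyc].
set L := y :: Q in aL un cyc s3.
have pL : path (adj G) x L by move: cyc; rewrite (cycle_path y) => hc'; exact: hc'.
have lastL : last x L = x by [].
have pp : path (adj G) y Q by move: pL => /= /andP [].
have [u [v [p1 [p2 [ehuv auv eL]]]]] := pedges_ends pp hp.
move: sD => /and3P [sD3 uD cD].
have [uD' vD'] : u \in D /\ v \in D.
  by apply: (cedges_endsE cD (adj_nb auv)); rewrite -ehuv.
have uL : u \in L by rewrite /L eL mem_cat !inE eqxx orbT.
have vL : v \in L by rewrite /L eL mem_cat !inE eqxx !orbT.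
have uv : u != v.
  move: un; rewrite /L eL cat_uniq => /and3P [_ _]; rewrite /= inE.
  by case/andP => /norP [].
have hasL : has (fun w => w \in D) L by apply/hasP; exists u.
have [L1 [y' [L' [eL1 yD hL1]]]] := first_split hasL.
have notL1 : forall w, w \in D -> w \notin L1.
  by move=> w wD; apply/negP => wL1; move/hasP: hL1; apply; exists w.
have hasL' : has (fun w => w \in D) L'.
  case: (eqVneq u y') => [euy|nuy].
    apply/hasP; exists v => //.
    move: vL; rewrite eL1 mem_cat (negbTE (notL1 _ vD')) inE /= -euy eq_sym.
    by rewrite (negbTE uv).
  apply/hasP; exists u => //.
  move: uL; rewrite eL1 mem_cat (negbTE (notL1 _ uD')) inE /=.
  by rewrite (negbTE nuy).
have [M [x' [L2 [eL' xD hL2]]]] := last_split hasL'.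
have notL2 : forall w, w \in D -> w \notin L2.
  by move=> w wD; apply/negP => wL2; move/hasP: hL2; apply; exists w.
rewrite {}eL' in eL1.
have yx : y' != x'.
  move: un; rewrite eL1 cat_uniq => /and3P [_ _] /= /andP [+ _].
  by rewrite mem_cat inE negb_or => /andP [_]; rewrite negb_or => /andP [].
have y'L : y' \in L by rewrite eL1 mem_cat inE eqxx orbT.
have x'L : x' \in L by rewrite eL1 mem_cat inE mem_cat inE eqxx !orbT.
have ay : a != y' by apply: contraNneq aL => ->.
have ax : a != x' by apply: contraNneq aL => ->.
have [W [pW lW uW aW sW]] := arc uD cD yD xD aD yx ay ax.
move: pL; rewrite eL1 cat_path => /andP [pL1 /= /andP [aL1y]].
rewrite cat_path => /andP [_ /= /andP [_ pL2]].
have lL2 : last x' L2 = x.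
  by rewrite -[RHS]lastL eL1 last_cat /= last_cat.
have uL12 : uniq (L1 ++ L2).
  apply: (subseq_uniq _ un); rewrite eL1; apply: cat_subseq => //.
  have -> : y' :: M ++ x' :: L2 = (y' :: M ++ [:: x']) ++ L2 by rewrite /= -catA.
  exact: suffix_subseq.
exists (y' :: W ++ L2 ++ L1); split.
- apply/and3P; split.
  + have xW : x' \in W.
      by move: (mem_last y' W); rewrite lW inE eq_sym (negbTE yx).
    have hh := size2 aW xW ax.
    by rewrite /= !size_cat ltnS; apply: leq_trans hh (leq_addr _ _).
  + have -> : y' :: W ++ L2 ++ L1 = (y' :: W) ++ (L2 ++ L1) by [].
    rewrite cat_uniq uW /=; apply/andP; split; last first.
      by rewrite uniq_catC.
    apply/hasPn => w; rewrite mem_cat => /orP [wL2|wL1]; rewrite inE negb_or;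
      apply/andP; split.
    * by apply: contraTneq wL2 => ->; apply: notL2.
    * by apply: contraTN wL2 => /sW; apply: notL2.
    * by apply: contraTneq wL1 => ->; apply: notL1.
    * by apply: contraTN wL1 => /sW; apply: notL1.
  + rewrite /= rcons_cat rcons_cat cat_path pW lW cat_path pL2 lL2 rcons_path pL1.
    by rewrite aL1y.
- by rewrite inE mem_cat aW orbT.
- rewrite eg.
  change (eb x y \in eb (last y' (W ++ L2 ++ L1)) y' :: pedges y' (W ++ L2 ++ L1)).
  rewrite inE; apply/orP.
  case: (L1) eL1 aL1y pL1 => [|z L1'] eL1' aL1y' pL1'.
    left; move: eL1'; rewrite /L => -[-> _].
    by rewrite last_cat lW last_cat lL2.
  right; move: eL1'; rewrite /L => -[-> _].
  rewrite pedges_cat lW pedges_cat lL2 !mem_cat.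
  by rewrite [X in _ \in X]/= inE eqxx !orbT.
Qed.

Lemma adj_sub (G H : E -> bool) (u v : V) : (forall e, H e -> G e) -> adj H u v -> adj G u v.
Proof. by move=> HG auv; have nuv := adj_nb auv; move: auv; rewrite !adjE //; apply: HG. Qed.

Lemma cycle_sub (G H : E -> bool) c : (forall e, H e -> G e) -> cycle (adj H) c -> cycle (adj G) c.
Proof.
move=> HG; case: c => [//|x p] /=; apply: sub_path => u v; exact: adj_sub.
Qed.

Lemma Fo_acyclic (G : E -> bool) : acyclic (Fo G).
Proof.
move=> c /and3P [s3 un cyc].
have cG : cycle (adj G) c by apply: cycle_sub cyc => e /andP [].
have ne : cedges c != [::] by rewrite -size_eq0 size_cedges; case: (c) s3.
have [m mc mall] := max_exists ne.
have := cedges_G cyc mc; rewrite /Fo => /andP [_ /negP]; apply.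
by apply/asboolP; exists c; rewrite /simple_cycle s3 un cG /maxon mc mall.
Qed.

Lemma count_lt (s : seq E) g h : g \in s -> elt g h ->
  (count (fun f => elt f g) s < count (fun f => elt f h) s)%N.
Proof.
move=> + hgh; elim: s => [//|f s IH] /=; rewrite inE => /orP [/eqP <- | gs].
  rewrite (negbTE (elt_irr g)) hgh add0n add1n ltnS.
  by apply: sub_count => f' /= h'; exact: elt_trans h' hgh.
rewrite -addnS; apply: leq_add; last exact: IH.
by case: (boolP (elt f g)) => // hfg; rewrite (elt_trans hfg hgh).
Qed.

Lemma edge_conn (G : E -> bool) a b : finitely_many_cycles G -> adj G a b -> conn (Fo G) a b.
Proof.
move=> fmc ab.
have [sc hsc] := (finite_seqP _).1 (fmc a).
pose Se := flatten (map cedges sc).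
have SeP : forall g, g \in Se <-> exists D, [/\ simple_cycle G D, a \in D & g \in cedges D].
  move=> g; split.
    move=> /flattenP [s /mapP [D Dsc ->] gD]; exists D.
    have : [set` sc] D by [].
    by rewrite -hsc => -[? ?].
  move=> [D [sD aD gD]]; apply/flattenP; exists (cedges D) => //.
  apply/mapP; exists D => //.
  have : [set c | simple_cycle G c /\ a \in c] D by [].
  by rewrite hsc.
pose rk g := count (fun f => elt f g) Se.
suff claim : forall n u v, (rk (eb u v) < n)%N -> adj G u v -> eb u v \in Se ->
    conn (Fo G) u v.
  case: (boolP (Fo G (eb a b))) => Fab.
    by apply: connected_adj; rewrite adjE // (adj_nb ab).
  have Gab : G (eb a b) by rewrite -adjE ?(adj_nb ab).
  move: Fab; rewrite /Fo Gab /= negbK => /asboolP [c /andP [sc' /andP [hc _]]].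
  have cc : cycle (adj G) c by case/and3P: sc'.
  have [ac _] := cedges_endsE cc (adj_nb ab) hc.
  apply: (claim (rk (eb a b)).+1) => //.
  by apply/SeP; exists c.
elim => [//|n IH] u v hr auv hS.
case: (boolP (Fo G (eb u v))) => Fuv.
  by apply: connected_adj; rewrite adjE // (adj_nb auv).
have Guv : G (eb u v) by rewrite -adjE ?(adj_nb auv).
move: Fuv; rewrite /Fo Guv /= negbK => /asboolP [c /andP [sc' /andP [hc hall]]].
have [D [sD aD hD]] := (SeP _).1 hS.
have [y [Q [sL eh memL memE]]] := rot_edge sc' hc.
have sL' := sL; move: sL' => /and3P [_ _ cyc].
have pp : path (adj G) y Q by move: cyc; rewrite /= rcons_path => /andP [].
have nxy : nb (last y Q) y.
  by move: cyc; rewrite /= rcons_path => /andP [_ /adj_nb].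
have cyx : conn (Fo G) y (last y Q).
  apply: path_connected pp _ => u' v' au'v' hin.
  have gc : eb u' v' \in cedges c.
    by rewrite -memE; change (eb u' v' \in eb (last y Q) y :: pedges y Q); rewrite inE hin orbT.
  have gneq : eb u' v' != eb u v by rewrite eh; exact: closing_not_path sL hin.
  have hlt : elt (eb u' v') (eb u v).
    have := elt_total gneq; move/allP: hall => /(_ _ gc) /negbTE -> .
    by rewrite orbF.
  have gS : eb u' v' \in Se.
    apply/SeP; exact: merge sD aD hD sc' hc gc.
  apply: IH => //; apply: leq_trans (count_lt gS hlt) _.
  by rewrite -ltnS.
have [[-> ->]|[-> ->]] := eb_inj (adj_nb auv) nxy eh.
  exact: connected_sym.
exact: cyx.
Qed.

Theorem Fo_forest (G : E -> bool) : finitely_many_cycles G -> spanning_forest_of G (Fo G).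
Proof.
move=> fmc; split.
- by move=> e /andP [].
- exact: Fo_acyclic.
- move=> u v; split.
    move=> [p [pp lp]]; exists p; split => //.
    by apply: sub_path pp => x y; apply: adj_sub => e /andP [].
  move=> [p [pp lp]].
  elim: p u pp lp => [|w p IH] u /=; first by move=> _ ->; apply: connected_refl.
  move=> /andP [auw pw] lp.
  exact: connected_trans (edge_conn fmc auw) (IH w pw lp).
Qed.

Definition sv (a v : V) : V := (v.1 + a.1, v.2 + a.2).
Definition shE (a : V) (e : E) : E := (sv a e.1, e.2).

Lemma sv_inj a : injective (sv a).
Proof. by move=> [x1 x2] [y1 y2] [/addIr -> /addIr ->]. Qed.

Lemma svK a v : sv a (sv (- a.1, - a.2) v) = v.
Proof. by case: v => x y; rewrite /sv /= !addrNK. Qed.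

Lemma edst_sh a e : edst (shE a e) = sv a (edst e).
Proof. by case: e => [[x y] []]; rewrite /edst /sv /= addrAC. Qed.

Lemma adj_sh G a u v : adj (fun f => G (shE a f)) u v = adj G (sv a u) (sv a v).
Proof.
rewrite /adj.
have E1 : forall w z b, (w == edst (z, b)) = (sv a w == edst (sv a z, b)).
  by move=> w z b; rewrite -[(sv a z, b)]/(shE a (z, b)) edst_sh (inj_eq (@sv_inj a)).
by rewrite (E1 v u false) (E1 v u true) (E1 u v false) (E1 u v true).
Qed.

Lemma eb_sh a u v : eb (sv a u) (sv a v) = shE a (eb u v).
Proof.
rewrite /eb.
have E1 : forall w z b, (sv a w == edst (sv a z, b)) = (w == edst (z, b)).
  by move=> w z b; rewrite -[(sv a z, b)]/(shE a (z, b)) edst_sh (inj_eq (@sv_inj a)).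
rewrite (E1 v u false) (E1 v u true) (E1 u v false).
by case: ifP => _ //; case: ifP => _ //; case: ifP => _.
Qed.

Lemma pedges_sh a x p : pedges (sv a x) (map (sv a) p) = map (shE a) (pedges x p).
Proof. by elim: p x => [|y p IH] x //=; rewrite eb_sh IH. Qed.

Lemma cedges_sh a c : cedges (map (sv a) c) = map (shE a) (cedges c).
Proof.
case: c => [//|x p].
change (pedges (last (sv a x) (map (sv a) p)) (map (sv a) (x :: p)) =
  map (shE a) (pedges (last x p) (x :: p))).
by rewrite last_map pedges_sh.
Qed.

Lemma shE_inj a : injective (shE a).
Proof. move=> [e1 e2] [f1 f2] [h1 h2 ->]; congr pair; apply: (@sv_inj a); by rewrite /sv h1 h2. Qed.

Lemma elt_sh a e f : elt (shE a e) (shE a f) = elt e f.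
Proof. by rewrite /elt /= !ltrD2r !(inj_eq (addIr _)). Qed.

Lemma simple_sh G a c :
  simple_cycle (fun f => G (shE a f)) c = simple_cycle G (map (sv a) c).
Proof.
rewrite /simple_cycle size_map (map_inj_uniq (@sv_inj a)) cycle_map.
congr [&& _, _ & _]; apply: eq_cycle => u v /=; exact: adj_sh.
Qed.

Lemma maxon_sh a c e : maxon (map (sv a) c) (shE a e) = maxon c e.
Proof.
rewrite /maxon cedges_sh (mem_map (@shE_inj a)) all_map; congr (_ && _).
by apply: eq_all => f /=; rewrite elt_sh.
Qed.

Lemma Fo_shift G a e : Fo (fun f => G (shE a f)) e = Fo G (shE a e).
Proof.
rewrite /Fo; congr (_ && ~~ _); apply: asbool_equiv_eq; split.
  move=> [c /andP [sc mc]]; exists (map (sv a) c).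
  by rewrite -simple_sh sc maxon_sh mc.
move=> [c /andP [sc mc]]; exists (map (sv (- a.1, - a.2)) c).
have hm : map (sv a) (map (sv (- a.1, - a.2)) c) = c.
  by rewrite -map_comp map_id_in // => v _; rewrite /= svK.
by rewrite simple_sh hm sc -(maxon_sh a) hm mc.
Qed.

Section meas.
Context d (M : measurableType d) (gr : M -> bool).
Hypothesis hgr : measurable_fun setT gr.

Lemma cyl_meas (e : E) (A : set M) : measurable A ->
  measurable [set x : conf M | A (x e)].
Proof. by move=> mA; apply: sub_sigma_algebra; exists e, A. Qed.

Lemma gr_meas e (b : bool) : measurable [set x : conf M | gr (x e) = b].
Proof.
have := hgr measurableT (I : measurable [set b]).
rewrite setTI => h; exact: (cyl_meas e h).
Qed.

Lemma meas_fin (es : seq E) (B : (E -> bool) -> bool) :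
  (forall G G', (forall f, f \in es -> G f = G' f) -> B G = B G') ->
  measurable [set x : conf M | B (fun e => gr (x e))].
Proof.
elim: es B => [|e es IH] B hB.
  case: (boolP (B (fun _ => true))) => hb.
    have -> : [set x : conf M | B (fun e => gr (x e))] = setT.
      by apply/seteqP; split => x //= _; rewrite (hB _ (fun _ => true)).
    exact: measurableT.
  have -> : [set x : conf M | B (fun e => gr (x e))] = set0.
    apply/seteqP; split => x //=; rewrite (hB _ (fun _ => true)) //.
    by rewrite (negbTE hb).
  exact: measurable0.
pose Bb (b : bool) G := B (fun f => if f == e then b else G f).
have hBb : forall b G G', (forall f, f \in es -> G f = G' f) -> Bb b G = Bb b G'.
  move=> b G G' h; apply: hB => f; rewrite inE; case: eqP => //= _; exact: h.
have -> : [set x : conf M | B (fun e => gr (x e))] =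
   ([set x : conf M | gr (x e) = true] `&` [set x | Bb true (fun e => gr (x e))]) `|`
   ([set x : conf M | gr (x e) = false] `&` [set x | Bb false (fun e => gr (x e))]).
  apply/seteqP; split => x /=.
    case E: (gr (x e)) => hx; [left|right]; split => //; rewrite /Bb;
      rewrite (hB _ (fun f => gr (x f))) // => f _; case: eqP => // ->; by rewrite E.
  move=> [[E h]|[E h]]; move: h; rewrite /Bb (hB _ (fun f => gr (x f))) // => f _;
    case: eqP => // ->; by rewrite E.
apply: measurableU; apply: measurableI; try exact: gr_meas.
  exact: IH (hBb true).
exact: IH (hBb false).
Qed.

End meas.


Definition ces (c : seq V) : seq E := flatten [seq [:: (u, false); (u, true)] | u <- c].

Lemma sc_agree (G G' : E -> bool) c : (forall f, f \in ces c -> G f = G' f) ->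
  simple_cycle G c = simple_cycle G' c.
Proof.
move=> h; rewrite /simple_cycle; congr [&& _, _ & _].
have hin : forall u b, u \in c -> (u, b) \in ces c.
  move=> u b uc; apply/flattenP; exists [:: (u, false); (u, true)].
    by apply/mapP; exists u.
  by case: b; rewrite !inE eqxx ?orbT.
apply: (@eq_in_cycle _ (fun u => u \in c)); last by apply/allP.
move=> u v uc vc; rewrite /adj !h //; exact: hin.
Qed.

Section meas2.
Context d (M : measurableType d) (gr : M -> bool).
Hypothesis hgr : measurable_fun setT gr.

Lemma meas_Fo (e : E) : measurable [set x : conf M | Fo (fun f => gr (x f)) e].
Proof.
pose Bn n (G : E -> bool) := if unpickle n is Some c then simple_cycle G c && maxon c e else false.
have -> : [set x : conf M | Fo (fun f => gr (x f)) e] =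
   [set x : conf M | gr (x e) = true] `&` ~` \bigcup_n [set x : conf M | Bn n (fun f => gr (x f))].
  apply/seteqP; split => x /=.
    move/andP => [-> hn]; split => //; move=> [n _ hb]; apply: (negP hn); apply/asboolP.
    by move: hb; rewrite /Bn; case: (unpickle n) => // c hc; exists c.
  move=> [hx hn]; apply/andP; split => //; apply/negP => /asboolP [c hc]; apply: hn.
  by exists (pickle c) => //; rewrite /Bn pickleK.
apply: measurableI; first exact: gr_meas.
apply: measurableC; apply: bigcupT_measurable => n.
apply: (@meas_fin d M gr hgr (if unpickle n is Some c then ces c else [::]) (Bn n)) => G G' h.
rewrite /Bn; case: (unpickle n) h => // c h; by rewrite (sc_agree h).
Qed.

Definition Phi (x : conf M) : conf (M * bool)%type :=
  fun e => (x e, Fo (fun f => gr (x f)) e).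

Lemma mPhi : measurable_fun setT Phi.
Proof.
apply: (@measurability _ _ (conf M) (conf (M * bool)%type) setT Phi (@cylinders _ (M * bool)%type)).
  by [].
move=> _ [B [e [A [mA ->]]] <-].
rewrite setTI.
have mAb : forall b, measurable [set m : M | A (m, b)].
  by move=> b; have := measurable_ysection b mA; rewrite ysectionE.
have -> : Phi @^-1` [set y | A (y e)] =
   ([set x : conf M | A (x e, true)] `&` [set x | Fo (fun f => gr (x f)) e]) `|`
   ([set x : conf M | A (x e, false)] `&` ~` [set x | Fo (fun f => gr (x f)) e]).
  apply/seteqP; split => x; rewrite /Phi /=.
    by case: (Fo _ e) => h; [left|right].
  by move=> [[h ->]|[h /negP/negbTE ->]].
apply: measurableU; apply: measurableI; try exact: (cyl_meas e (mAb _)).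
  exact: meas_Fo.
apply: measurableC; exact: meas_Fo.
Qed.

End meas2.


Section inst.
Context d (M : measurableType d) (gr : {mfun M >-> bool}).
HB.instance Definition _ := isMeasurableFun.Build _ _ (conf M) (conf (M * bool)%type)
  (Phi gr) (mPhi (@measurable_funPT _ _ _ _ gr)).
End inst.

Lemma Phi_shift d (M : measurableType d) (gr : M -> bool) a (x : conf M) :
  Phi gr (Defs.shift a x) = Defs.shift a (Phi gr x).
Proof.
apply: funext => e; rewrite /Phi /Defs.shift; congr pair.
exact: (Fo_shift (fun f => gr (x f)) a e).
Qed.

Lemma general d (M : measurableType d) (gr : {mfun M >-> bool}) (R : realType) :
  forest_coupling_statement gr R.
Proof.
move=> rho ti hae.
have hgr : measurable_fun setT gr := @measurable_funPT _ _ _ _ gr.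
have mP : forall A, measurable A -> measurable (Phi gr @^-1` A).
  by move=> A mA; have := mPhi hgr measurableT mA; rewrite setTI.
exists (distribution rho (Phi gr)); split.
- by move=> A mA.
- move=> a A mA.
  change (rho (Phi gr @^-1` (Defs.shift a @^-1` A)) = rho (Phi gr @^-1` A)).
  have -> : Phi gr @^-1` (Defs.shift a @^-1` A) = Defs.shift a @^-1` (Phi gr @^-1` A).
    by apply/seteqP; split => x; rewrite /preimage /= Phi_shift.
  by rewrite ti //; exact: mP.
- have [N [mN N0 sN]] : rho.-negligible
      (~` [set x | finitely_many_cycles (fun e => gr (x e))]) := hae.
  pose U (e : E) := [set y : conf (M * bool)%type |
     (y e).2 != Fo (fun f => gr (y f).1) e].
  pose pfst (y : conf (M * bool)%type) : conf M := fun e => (y e).1.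
  pose N' := (\bigcup_e U e) `|` (pfst @^-1` N).
  have hgr' : measurable_fun setT (fun p : M * bool => gr p.1).
    exact: measurableT_comp hgr measurable_fst.
  have mU : forall e, measurable (U e).
    move=> e.
    have m2 : measurable [set y : conf (M * bool)%type | (y e).2 = true].
      apply: (cyl_meas e (A := [set p : M * bool | p.2 = true])).
      by have := @measurable_snd _ _ M bool measurableT [set true] I; rewrite setTI.
    have mF := meas_Fo hgr' e.
    have -> : U e = ([set y : conf (M * bool)%type | (y e).2 = true] `&`
        ~` [set y | Fo (fun f => gr (y f).1) e]) `|`
        (~` [set y : conf (M * bool)%type | (y e).2 = true] `&`
        [set y | Fo (fun f => gr (y f).1) e]).
      apply/seteqP; split => y; rewrite /U /=.
        by case: ((y e).2); case: (Fo _ e) => // _; [left|right].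
      by move=> [[-> /negP/negbTE ->]|[/negP/negbTE -> ->]].
    apply: measurableU; apply: measurableI => //; exact: measurableC.
  have mpfst : measurable (pfst @^-1` N).
    have : measurable_fun setT pfst.
      apply: (@measurability _ _ (conf (M * bool)%type) (conf M) setT pfst (@cylinders _ M)).
        by [].
      move=> _ [B [e [A [mA ->]]] <-]; rewrite setTI.
      apply: (cyl_meas e (A := [set p : M * bool | A p.1])).
      by have := @measurable_fst _ _ M bool measurableT A mA; rewrite setTI.
    by move/(_ measurableT _ mN); rewrite setTI.
  have mN' : measurable N'.
    apply: measurableU => //; apply: countable_bigcupT_measurable => //.
    exact: countableP.
  exists N'; split => //.
  + change (rho (Phi gr @^-1` N') = 0%E).
    have -> : Phi gr @^-1` N' = N.
      apply/seteqP; split => x; rewrite /N' /preimage /=.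
        by case => // -[e _]; rewrite /U /= eqxx.
      by move=> hx; right.
    exact: N0.
  + move=> y /= hy; case: (pselect (N' y)) => // hN'; exfalso; apply: hy.
    have hy2 : forall e, (y e).2 = Fo (fun f => gr (y f).1) e.
      move=> e; case: (eqVneq ((y e).2) (Fo (fun f => gr (y f).1) e)) => // hne.
      by exfalso; apply: hN'; left; exists e.
    have fmc : finitely_many_cycles (fun e => gr (y e).1).
      case: (pselect (finitely_many_cycles (fun e => gr (y e).1))) => // hf.
      by exfalso; apply: hN'; right; apply: sN.
    have -> : (fun e => (y e).2) = Fo (fun f => gr (y f).1) by apply: funext.
    exact: Fo_forest.
Qed.

Local Close Scope ring_scope. Local Close Scope classical_set_scope.

Definition idb (b : bool) : bool := b.
Lemma m_idb : measurable_fun setT idb.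
Proof. exact: measurable_id. Qed.
HB.instance Definition _ := isMeasurableFun.Build _ _ bool bool idb m_idb.

Section fstb.
Context (R : realType).
Definition fstb (p : bool * R) : bool := p.1.
Lemma m_fstb : measurable_fun setT fstb.
Proof. exact: measurable_fst. Qed.
HB.instance Definition _ := isMeasurableFun.Build _ _ (bool * R)%type bool fstb m_fstb.
End fstb.

Theorem lemma2p7 (R : realType) :
  (* version for a translation-invariant law of G alone *)
  forest_coupling_statement (fun b : bool => b) R /\
  (* version for a jointly translation-invariant law of (G, w), w in R^{E(Z^2)} *)
  forest_coupling_statement (fun p : bool * R => p.1) R.
Proof.
split.
  exact (@general _ _ (idb : {mfun bool >-> bool}) R).
exact (@general _ _ (@fstb R : {mfun (bool * R)%type >-> bool}) R).
Qed.
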